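(* Let $p$ be a prime, $n\geq 2$, $T=Tr(\mathbb{Z}_{p^n})$ and $G=\Gamma(T)$. Let $X$ be the set of nonzero zero-divisors of $\mathbb{Z}_{p^n}$ (i.e. the nonzero multiples of $p$), and let $$A_4^*=\left\{\begin{pmatrix}m+z&0\\0&z\end{pmatrix}\middle| m\in X,z\in\mathbb{Z}_{p^n}\right\},\ A_5^*=\left\{\begin{pmatrix}z&m\\0&z\end{pmatrix}\middle| m\in X,z\in\mathbb{Z}_{p^n}\right\},\ A_6^*=\left\{\begin{pmatrix}m_1+z&m_2\\0&z\end{pmatrix}\middle| m_1,m_2\in X,z\in\mathbb{Z}_{p^n}\right\},$$ and for a set $A^*$ of vertices write $d(A^* )=\sum_{B\in A^*}d(B)$. Then (i) $d(A_4^* )=d(A_5^* )=(p-1)\,p^{2n-1}\sum_{r=1}^{n-1}\left(p^{2n}-p^{n-r}-p^{-r}\right)$; (ii) $d(A_6^* )=2\alpha-\beta$, where $$\alpha=(p-1)\,p^{2n-1}\sum_{r=1}^{n-1}\Big((p^{3n}+p^n+1)p^{-r}-(p^{2n}+p^n)p^{-2r}-p^{2n}\Big),$$ $$\beta=(p-1)^2\sum_{r=1}^{n-1}p^{3n-2r-2}\left(p^{2n+r}-p^n-1\right).$$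
   Context: For a ring $S$ with identity whose center $Z(S)$ is not all of $S$, the commuting graph $\Gamma(S)$ is the simple graph with vertex set $S\setminus Z(S)$, in which two distinct vertices $a,b$ are adjacent iff $ab=ba$; $d(B)$ is the degree of vertex $B$. $Tr(R)$ denotes the ring of all $2\times 2$ upper triangular matrices over $R$. *)

(* Defs.v *)
From mathcomp Require Import all_boot all_order all_algebra.
Set Implicit Arguments. Unset Strict Implicit. Unset Printing Implicit Defensive.
Import GRing.Theory.
Local Open Scope ring_scope.

Section Defs.
Variable R : finComNzRingType.

Definition tri (a b c : R) : 'M[R]_2 :=
  \matrix_(i < 2, j < 2)
    (if (i : nat) == 0%N then (if (j : nat) == 0%N then a else b)
     else (if (j : nat) == 0%N then 0 else c)).

Definition Tr : {set 'M[R]_2} := [set A : 'M[R]_2 | A ord_max ord0 == 0].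

Definition centerTr : {set 'M[R]_2} :=
  [set A in Tr | [forall B in Tr, A *m B == B *m A]].

Definition vertices : {set 'M[R]_2} := Tr :\: centerTr.

Definition deg (B : 'M[R]_2) : nat :=
  #|[set A in vertices | (A != B) && (A *m B == B *m A)]|.

Definition degset (S : {set 'M[R]_2}) : nat := \sum_(B in S) deg B.

Definition nzzd : {set R} := [set x : R | (x != 0) && [exists y : R, (y != 0) && (x * y == 0)]].

Definition A4 : {set 'M[R]_2} :=
  [set A : 'M[R]_2 | [exists m in nzzd, exists z : R, A == tri (m + z) 0 z]].
Definition A5 : {set 'M[R]_2} :=
  [set A : 'M[R]_2 | [exists m in nzzd, exists z : R, A == tri z m z]].
Definition A6 : {set 'M[R]_2} :=
  [set A : 'M[R]_2 |
    [exists m1 in nzzd, exists m2 in nzzd, exists z : R, A == tri (m1 + z) m2 z]].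

End Defs.

(* Main.v *)
Require Import Defs.
From mathcomp Require Import all_boot all_order all_algebra.
From mathcomp Require Import zify ring lra.
Set Implicit Arguments. Unset Strict Implicit. Unset Printing Implicit Defensive.
Import GRing.Theory.
Local Open Scope ring_scope.

Section Generic.
Variable R : finComNzRingType.

Lemma triE (a b c : R) (i j : 'I_2) : tri a b c i j = if (i:nat)==0%N then (if (j:nat)==0%N then a else b) else (if (j:nat)==0%N then 0 else c).
Proof. by rewrite /tri mxE. Qed.

Lemma tri_eq (a b c a' b' c' : R) : (tri a b c == tri a' b' c') = [&& a == a', b == b' & c == c'].
Proof.
apply/eqP/and3P => [E|[/eqP-> /eqP-> /eqP->]] //.
have := congr1 (fun M : 'M[R]_2 => (M ord0 ord0, M ord0 ord_max, M ord_max ord_max)) E.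
by rewrite !triE /= => [[-> -> ->]].
Qed.

Lemma mul_tri (a b c x y z : R) : tri a b c *m tri x y z = tri (a*x) (a*y + b*z) (c*z).
Proof.
apply/matrixP=> i j; rewrite !mxE !big_ord_recl big_ord0 !triE /=.
case: i => [[|[|//]] Hi]; case: j => [[|[|//]] Hj] /=;
rewrite ?mulr0 ?mul0r ?addr0 ?add0r //.
Qed.

Lemma trE (A : 'M[R]_2) : A \in Tr R -> A = tri (A ord0 ord0) (A ord0 ord_max) (A ord_max ord_max).
Proof.
rewrite inE => /eqP H; apply/matrixP=> i j; rewrite triE.
case: i => [[|[|//]] Hi]; case: j => [[|[|//]] Hj] /=;
rewrite -?H; congr (A _ _); exact: val_inj.
Qed.

Definition F (t : R * R * R) := tri (t.1.1 + t.2) t.1.2 t.2.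

Lemma F_inj : injective F.
Proof.
move=> [[a b] c] [[a' b'] c'] /eqP; rewrite /F tri_eq /= => /and3P[/eqP E /eqP -> /eqP Ec].
by subst c'; move/addIr: E => ->.
Qed.

Lemma F_comm t s : (F t *m F s == F s *m F t) = (t.1.1 * s.1.2 == s.1.1 * t.1.2).
Proof.
rewrite /F !mul_tri tri_eq [(s.1.1 + s.2) * _]mulrC eqxx [s.2 * _]mulrC eqxx andbT /=.
rewrite -subr_eq0 -[in RHS]subr_eq0.
set l := (X in X == 0); set r := (X in _ = (X == 0)).
by have -> : l = r by rewrite /l /r; ring.
Qed.

Lemma F_Tr t : F t \in Tr R.
Proof. by rewrite inE /F triE. Qed.

Lemma Tr_F A : A \in Tr R -> A = F ((A ord0 ord0 - A ord_max ord_max, A ord0 ord_max), A ord_max ord_max).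
Proof. by move/trE => {1}->; rewrite /F /= subrK. Qed.

Lemma F_center t : (F t \in centerTr R) = (t.1 == 0).
Proof.
rewrite inE F_Tr /=; apply/forall_inP/idP => [H|/eqP H B /Tr_F ->].
  have h1 := H _ (F_Tr ((1,0),0)); have h2 := H _ (F_Tr ((0,1),0)).
  move: h1 h2; rewrite !F_comm /= mulr0 mul1r mulr1 mul0r.
  by case: t {H} => [[a b] c] /= /eqP <- /eqP ->.
by rewrite F_comm H /= mul0r mulr0.
Qed.

Lemma vertices_F : vertices R = F @: [set t : R * R * R | t.1 != 0].
Proof.
apply/setP=> A; rewrite inE; apply/andP/imsetP => [[nc /[dup] HT /Tr_F E]|[t]].
  eexists; last exact: E.
  by rewrite inE -F_center -E.
by rewrite inE => Ht ->; rewrite F_center Ht F_Tr.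
Qed.


Definition S (u b : R) := #|[set x : R * R | x.1 * b == u * x.2]|.

Lemma card_fst (Q : pred (R * R)) :
  #|[set s : R * R * R | Q s.1]| = (#|[set x | Q x]| * #|R|)%N.
Proof.
rewrite -[#|R|]cardsT -cardsX; apply: eq_card => s.
by case: s => x c; rewrite !inE andbT.
Qed.

Lemma deg_F t : t.1 != 0 -> (deg (F t) + 1 + #|R| = S t.1.1 t.1.2 * #|R|)%N.
Proof.
move=> t0; rewrite /deg.
have -> : [set A in vertices R | (A != F t) && (A *m F t == F t *m A)] =
   F @: ([set s : R * R * R | (s.1 != 0) && (s.1.1 * t.1.2 == t.1.1 * s.1.2)] :\ t).
  apply/setP=> A; rewrite inE vertices_F; apply/andP/imsetP => [[/imsetP[s]]|[s]].
    rewrite inE => s0 -> /andP[nst]; rewrite F_comm => rel.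
    exists s => //; rewrite !inE s0 rel andbT.
    by rewrite andbT; apply: contra_neq nst => ->.
  rewrite !inE => /andP[nst /andP[s0 rel]] ->; split.
    by apply/imsetP; exists s => //; rewrite inE.
  by rewrite (inj_eq F_inj) nst F_comm.
rewrite card_imset; last exact: F_inj.
set X := [set s : R * R * R | _].
set Z := [set x : R * R | x.1 * t.1.2 == t.1.1 * x.2].
have E : #|X| = (1 + #|X :\ t|)%N by rewrite (cardsD1 t X) inE t0 eqxx.
have E3 : #|Z| = (1 + #|Z :\ (0%R : R * R)|)%N.
  by rewrite (cardsD1 (0%R : R * R) Z) inE /= mul0r mulr0 eqxx.
have E2 : #|X| = (#|Z :\ (0%R : R * R)| * #|R|)%N.
  rewrite -[#|R|]cardsT -cardsX; apply: eq_card => s.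
  by case: s => x c; rewrite !inE andbT.
have -> : S t.1.1 t.1.2 = #|Z| by [].
rewrite E3; move: E E2; set a := #|X :\ t|; set b := #|Z :\ (0%R : R * R)|; set c := #|X|.
move=> -> E2; rewrite mulnDl mul1n -E2; lia.
Qed.

Lemma S_swap u b : S u b = S b u.
Proof.
rewrite /S -(card_imset _ (can_inj (@swap_pairK R R))).
apply: eq_card => x; rewrite (can2_imset_pre _ (@swap_pairK R R) (@swap_pairK R R)).
by rewrite !inE /= eq_sym mulrC [b * _]mulrC.
Qed.

Definition ann (u : R) := [set y | u * y == 0].

Lemma S_mul u t : S u (u * t) = (#|R| * #|ann u|)%N.
Proof.
pose g (y : R * R) := (y.1, y.1 * t - y.2).
have gK : involutive g by move=> [a b]; rewrite /g /= opprB addrC subrK.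
rewrite -[#|R|]cardsT -cardsX /S -(card_imset _ (can_inj gK)).
apply: eq_card => x; rewrite (can2_imset_pre _ gK gK) !inE /=.
by rewrite -subr_eq0; have -> : x.1 * (u * t) - u * (x.1 * t - x.2) = u * x.2 by ring.
Qed.


Lemma degset_F (Q : pred (R * R)) (HQ : forall x, Q x -> x != 0) :
  (degset (F @: [set t : R * R * R | Q t.1]))%:R =
  \sum_(x | Q x) ((S x.1 x.2)%:R * #|R|%:R - #|R|%:R - 1) *+ #|R| :> rat.
Proof.
rewrite /degset big_imset /=; last by move=> a b _ _; apply: F_inj.
rewrite natr_sum.
transitivity (\sum_(x | Q x) \sum_(c : R) ((S x.1 x.2)%:R * #|R|%:R - #|R|%:R - 1 : rat)).
  rewrite pair_big /=; apply: eq_big => t; first by rewrite inE andbT.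
  rewrite inE => /HQ /deg_F E.
  have := congr1 (fun k => k%:R : rat) E; rewrite !natrD !natrM /= => E'.
  by rewrite -E'; ring.
apply: eq_bigr => x _; by rewrite sumr_const.
Qed.

Lemma A4E : A4 R = F @: [set t : R * R * R | (t.1.1 \in nzzd R) && (t.1.2 == 0)].
Proof.
apply/setP=> A; rewrite inE; apply/idP/imsetP.
  case/exists_inP => m Hm /existsP [z /eqP ->].
  by exists ((m, 0), z); rewrite // inE /= Hm eqxx.
case=> [[[m b] z]]; rewrite inE /= => /andP[Hm /eqP ->] ->.
by apply/exists_inP; exists m => //; apply/existsP; exists z.
Qed.

Lemma A5E : A5 R = F @: [set t : R * R * R | (t.1.1 == 0) && (t.1.2 \in nzzd R)].
Proof.
apply/setP=> A; rewrite inE; apply/idP/imsetP.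
  case/exists_inP => m Hm /existsP [z /eqP ->].
  by exists ((0, m), z); rewrite /F /= ?add0r // inE /= Hm eqxx.
case=> [[[a m] z]]; rewrite inE /= => /andP[/eqP -> Hm] ->.
by apply/exists_inP; exists m => //; apply/existsP; exists z; rewrite /F /= add0r.
Qed.

Lemma A6E : A6 R = F @: [set t : R * R * R | (t.1.1 \in nzzd R) && (t.1.2 \in nzzd R)].
Proof.
apply/setP=> A; rewrite inE; apply/idP/imsetP.
  case/exists_inP => m1 Hm1 /exists_inP [m2 Hm2 /existsP [z /eqP ->]].
  by exists ((m1, m2), z); rewrite // inE /= Hm1 Hm2.
case=> [[[m1 m2] z]]; rewrite inE /= => /andP[Hm1 Hm2] ->.
apply/exists_inP; exists m1 => //; apply/exists_inP; exists m2 => //.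
by apply/existsP; exists z.
Qed.

Lemma nzzd_neq0 x : x \in nzzd R -> x != 0.
Proof. by rewrite inE => /andP[]. Qed.

Lemma sum_pair1 (f : R * R -> rat) :
  \sum_(x : R * R | (x.1 \in nzzd R) && (x.2 == 0)) f x = \sum_(m in nzzd R) f (m, 0).
Proof.
transitivity (\sum_(m in nzzd R) \sum_(j | j == 0) f (m, j)).
  by rewrite pair_big_dep; apply: eq_big => [[a b]|[a b] _].
by apply: eq_bigr => m _; rewrite big_pred1_eq.
Qed.

Lemma sum_pair2 (f : R * R -> rat) :
  \sum_(x : R * R | (x.1 == 0) && (x.2 \in nzzd R)) f x = \sum_(m in nzzd R) f (0, m).
Proof.
transitivity (\sum_(i | i == 0) \sum_(m in nzzd R) f (i, m)).
  by rewrite pair_big_dep; apply: eq_big => [[a b]|[a b] _].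
by rewrite big_pred1_eq.
Qed.

Lemma sum_pair3 (f : R * R -> rat) :
  \sum_(x : R * R | (x.1 \in nzzd R) && (x.2 \in nzzd R)) f x =
  \sum_(m1 in nzzd R) \sum_(m2 in nzzd R) f (m1, m2).
Proof.
by rewrite pair_big_dep; apply: eq_big => [[a b]|[a b] _].
Qed.

End Generic.
Section ZN.
Variables (p n : nat) (hp : prime p) (hn : (2 <= n)%N).
Local Notation N := (p ^ n)%N.

Lemma N1 : (1 < N)%N.
Proof.
rewrite -{1}(exp1n n) ltn_exp2r ?prime_gt1 //; lia.
Qed.

Lemma Zcard : #|{: 'Z_N}| = N.
Proof. by rewrite card_ord Zp_cast // N1. Qed.

Lemma Zval (x : 'Z_N) : x = (val x)%:R.
Proof. by rewrite natr_Zp. Qed.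

Lemma Zeq0 k : ((k%:R : 'Z_N) == 0) = (N %| k)%N.
Proof.
by rewrite -val_eqE /= val_Zp_nat ?N1 // /dvdn.
Qed.

Lemma Zmul0 (x y : 'Z_N) : (x * y == 0) = (N %| val x * val y)%N.
Proof. by rewrite -Zeq0 natrM -!Zval. Qed.

Lemma Zlt (x : 'Z_N) : (val x < N)%N.
Proof. by move: (ltn_ord x); rewrite [in X in (_ < X)%N -> _]Zp_cast // N1. Qed.

Lemma Zsum (P : pred nat) (G : nat -> rat) :
  \sum_(x : 'Z_N | P (val x)) G (val x) = \sum_(0 <= k < N | P k) G k.
Proof. by rewrite big_mkord Zp_cast // N1. Qed.


Lemma Zsum_nat (P : pred nat) (G : nat -> nat) :
  (\sum_(x : 'Z_N | P (val x)) G (val x) = \sum_(0 <= k < N | P k) G k)%N.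
Proof. by rewrite big_mkord Zp_cast // N1. Qed.

Lemma cnt_mult d e : (0 < d)%N -> (\sum_(0 <= k < d * e | d %| k) 1)%N = e.
Proof.
move=> d0; case: e => [|e]; first by rewrite muln0 big_geq.
have de: (0 < d * e.+1)%N by rewrite muln_gt0 d0.
rewrite big_mkcond /= big_ltn // dvdn0 /=.
have := divn_count_dvd d (d * e.+1).-1; rewrite prednK // => <-.
have -> : (d * e.+1).-1 = (e * d + d.-1)%N by rewrite mulnS mulnC; lia.
rewrite divnMDl // divn_small ?addn0 //; last by rewrite prednK.
Qed.

Lemma nzzdE (x : 'Z_N) : (x \in nzzd 'Z_N) = (val x != 0)%N && (p %| val x)%N.
Proof.
rewrite inE -val_eqE /=; case: (val x =P 0)%N => //= x0.
apply/existsP/idP => [[y /andP[y0]]|px].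
  rewrite Zmul0; apply: contraLR => npx.
  have cN : coprime N (val x) by rewrite coprime_pexpl ?prime_coprime; lia.
  rewrite (Gauss_dvdr _ cN); apply: contra y0 => Hy.
  rewrite -val_eqE /=; case/dvdnP: Hy => k Hk; have := Zlt y; rewrite Hk.
  move=> lt; have k0 : k = 0%N.
    by case: k lt {Hk} => // k; rewrite mulSn ltnNge leq_addr.
  by rewrite Hk k0.
exists ((p ^ n.-1)%N%:R); apply/andP; split.
  rewrite Zeq0; apply/negP => /dvdn_leq; rewrite expn_gt0 prime_gt0 // => /(_ isT).
  by rewrite leq_exp2l ?prime_gt1 //; lia.
rewrite -[x]natr_Zp -natrM Zeq0.
case/dvdnP: px => w ->; rewrite -mulnA -expnS prednK; last by lia.
exact: dvdn_mull.
Qed.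


Definition v (x : 'Z_N) := logn p (val x).

Lemma v_lt (x : 'Z_N) : (0 < val x)%N -> (v x < n)%N.
Proof.
move=> x0; rewrite ltnNge -pfactor_dvdn //; apply/negP => /(dvdn_leq x0).
by rewrite leqNgt Zlt.
Qed.

Lemma v_ge1 (x : 'Z_N) : x \in nzzd 'Z_N -> (1 <= v x)%N.
Proof.
rewrite nzzdE => /andP[x0 px]; rewrite /v logn_gt0 mem_primes hp px andbT /= lt0n; exact: x0.
Qed.

Lemma ann_card (x : 'Z_N) : (0 < val x)%N -> #|ann x| = (p ^ v x)%N.
Proof.
move=> x0; have vn := v_lt x0.
rewrite -sum1_card.
rewrite (eq_bigl (fun y : 'Z_N => N %| val x * val y)%N); last by move=> y; rewrite inE Zmul0.
rewrite (Zsum_nat (fun k => N %| val x * k)%N (fun _ => 1%N)).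
have [w cw xw] := pfactor_coprime hp x0.
have NE : N = (p ^ (n - v x) * p ^ v x)%N by rewrite -expnD subnK // ltnW.
rewrite -/(v x) in xw; set r := v x in NE xw vn *; set xv := val x in xw *.
rewrite (eq_bigl (fun k => p ^ (n - r) %| k)%N).
  by rewrite NE cnt_mult // expn_gt0 prime_gt0.
move=> k; rewrite NE xw mulnAC dvdn_pmul2r ?expn_gt0 ?prime_gt0 //.
have hr : (0 < n - r)%N by rewrite subn_gt0.
rewrite Gauss_dvdr; first done.
rewrite coprime_pexpl; [exact: cw | exact: hr].
Qed.

Lemma div_Z (x y : 'Z_N) : (0 < val x)%N -> (0 < val y)%N -> (v x <= v y)%N -> exists t, y = x * t.
Proof.
move=> x0 y0 le.
have [w cw xw] := pfactor_coprime hp x0.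
have [w' _ yw] := pfactor_coprime hp y0.
have wu : (w%:R : 'Z_N) \is a GRing.unit.
  have hn0 : (0 < n)%N by lia.
  by rewrite unitZpE ?N1 // (@coprime_pexpl n p w hn0).
rewrite -/(v x) in xw; rewrite -/(v y) in yw; move: le; set r := v x; set s := v y => le.
exists ((w' * p ^ (s - r))%:R / w%:R).
rewrite [y]Zval [x]Zval yw xw mulrA -natrM.
have -> : (w * p ^ r * (w' * p ^ (s - r)))%N = (w' * p ^ s * w)%N.
  rewrite -[in RHS](subnKC le) expnD; set a := (p ^ r)%N; set b := (p ^ (s - r))%N; ring.
by rewrite [(w' * p ^ s * w)%:R]natrM mulrK.
Qed.


Lemma sum_drop0 (Q : pred nat) m : Q 0%N -> (0 < m)%N ->
  (\sum_(0 <= k < m | Q k) 1 = 1 + \sum_(0 <= k < m | (k != 0) && Q k) 1)%N.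
Proof.
move=> Q0 m0; rewrite [LHS]big_mkcond [in RHS]big_mkcond /=.
rewrite (bigD1_seq 0%N) ?mem_index_iota ?iota_uniq //= Q0.
rewrite [in RHS](bigD1_seq 0%N) ?mem_index_iota ?iota_uniq //= add0n.
by congr (addn 1 _); apply: eq_bigr => i ->.
Qed.

Lemma cntX s : (1 <= s <= n)%N ->
  (\sum_(x : 'Z_N | (x \in nzzd 'Z_N) && (s <= v x)) 1)%N = (p ^ (n - s) - 1)%N.
Proof.
case/andP=> s1 sn.
rewrite (eq_bigl (fun x : 'Z_N => (val x != 0) && (p ^ s %| val x))%N); last first.
  move=> x; rewrite nzzdE; case: (val x =P 0)%N => //= /eqP; rewrite -lt0n => x0.
  rewrite /v -pfactor_dvdn //; apply/andP/idP => [[]//|H]; split=> //.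
  by apply: dvdn_trans H; rewrite dvdn_exp.
rewrite (Zsum_nat (fun k => (k != 0) && (p ^ s %| k))%N (fun _ => 1%N)).
have NE : N = (p ^ s * p ^ (n - s))%N by rewrite -expnD subnKC.
have E1 : (\sum_(0 <= k < N | p ^ s %| k) 1)%N = (p ^ (n - s))%N.
  by rewrite NE cnt_mult // expn_gt0 prime_gt0.
have E2 := @sum_drop0 (fun k => p ^ s %| k)%N N (dvdn0 _) (ltnW N1).
by rewrite -E1 E2 addKn.
Qed.

Lemma L1 (G : nat -> rat) :
  \sum_(x : 'Z_N | x \in nzzd 'Z_N) G (v x) =
  \sum_(1 <= r < n) (p ^ (n - r) - p ^ (n - r.+1))%N%:R * G r.
Proof.
transitivity (\sum_(x : 'Z_N | x \in nzzd 'Z_N) \sum_(1 <= r < n) (v x == r)%:R * G r).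
  apply: eq_bigr => x Hx.
  have x0 : (0 < val x)%N by move: Hx; rewrite nzzdE lt0n => /andP[].
  rewrite (bigD1_seq (v x)) ?mem_index_iota ?iota_uniq ?v_ge1 ?v_lt //= eqxx mul1r.
  by rewrite big1 ?addr0 // => r; rewrite eq_sym => /negPf ->; rewrite mul0r.
rewrite exchange_big /=; apply: eq_big_nat => r /andP[r1 rn].
rewrite -mulr_suml; congr (_ * _).
transitivity ((\sum_(x : 'Z_N | (x \in nzzd 'Z_N) && (v x == r)) 1%N)%:R : rat).
  by rewrite natr_sum big_mkcondr /=; apply: eq_bigr => x _; case: (v x == r).
congr (_%:R).
have h1 : (1 <= r <= n)%N by lia.
have h2 : (1 <= r.+1 <= n)%N by lia.
have C1 := cntX h1; have C2 := cntX h2.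
rewrite (bigID (fun x => r.+1 <= v x)%N) /= in C1.
have E1 : (\sum_(x | (x \in nzzd 'Z_N) && (r <= v x) && (r.+1 <= v x)) 1 =
   \sum_(x | (x \in nzzd 'Z_N) && (r.+1 <= v x)) 1)%N.
  by apply: eq_bigl => x; case: (x \in _) => //=; case: ltngtP.
have E2 : (\sum_(x | (x \in nzzd 'Z_N) && (r <= v x) && ~~ (r.+1 <= v x)) 1 =
   \sum_(x | (x \in nzzd 'Z_N) && (v x == r)) 1)%N.
  by apply: eq_bigl => x; case: (x \in _) => //=; case: ltngtP.
rewrite E1 E2 C2 in C1.
have p0 : (0 < p ^ (n - r.+1))%N by rewrite expn_gt0 prime_gt0.
move: C1 p0; move: (\sum_(x in nzzd _ | v x == r) 1)%N => c; move: (p ^ (n - r))%N (p ^ (n - r.+1))%N => a b; lia.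
Qed.

Lemma X_pos (x : 'Z_N) : x \in nzzd 'Z_N -> (0 < val x)%N.
Proof. by rewrite nzzdE lt0n => /andP[]. Qed.

Lemma ZcardT : #|'Z_N| = N.
Proof. by rewrite card_ord Zp_cast // N1. Qed.

Lemma S0 (x : 'Z_N) : x \in nzzd 'Z_N -> S x 0 = (N * p ^ v x)%N.
Proof.
move=> Hx; have := S_mul x 0; rewrite mulr0 => ->.
by rewrite ZcardT ann_card ?X_pos.
Qed.

Lemma SX (x y : 'Z_N) : x \in nzzd 'Z_N -> y \in nzzd 'Z_N ->
  S x y = (N * p ^ minn (v x) (v y))%N.
Proof.
move=> Hx Hy; case: (leqP (v x) (v y)) => le.
  have [t E] := div_Z (X_pos Hx) (X_pos Hy) le.
  by rewrite E S_mul ZcardT ann_card ?X_pos.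
have [t E] := div_Z (X_pos Hy) (X_pos Hx) (ltnW le).
by rewrite S_swap E S_mul ZcardT ann_card ?X_pos.
Qed.

Definition cnt s := ((p ^ (n - s) - 1)%N)%:R : rat.

Lemma cntXr s : (1 <= s <= n)%N ->
  \sum_(x : 'Z_N | (x \in nzzd 'Z_N) && (s <= v x)%N) (1 : rat) = cnt s.
Proof. by move=> h; rewrite /cnt -(cntX h) natr_sum. Qed.

Lemma min_split (G : nat -> rat) :
  \sum_(x in nzzd 'Z_N) \sum_(y in nzzd 'Z_N) G (minn (v x) (v y)) =
  \sum_(x in nzzd 'Z_N) G (v x) * (cnt (v x) + cnt (v x).+1).
Proof.
transitivity (\sum_(x in nzzd 'Z_N) (\sum_(y | (y \in nzzd 'Z_N) && (v x <= v y)%N) G (v x)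
     + \sum_(y | (y \in nzzd 'Z_N) && ~~ (v x <= v y)%N) G (v y))).
  apply: eq_bigr => x Hx; rewrite (bigID (fun y => v x <= v y)%N) /=; congr (_ + _).
    by apply: eq_bigr => y /andP[_ H]; rewrite (minn_idPl H).
  by apply: eq_bigr => y /andP[_ H]; rewrite -ltnNge in H; rewrite (minn_idPr (ltnW H)).
rewrite big_split /=.
rewrite [X in _ + X](exchange_big_dep (fun y => y \in nzzd 'Z_N)) /=; last by move=> x y _ /andP[].
rewrite -big_split /=; apply: eq_bigr => x Hx.
have x1 := v_ge1 Hx; have xn := v_lt (X_pos Hx).
rewrite mulrDr; congr (_ + _).
  rewrite (eq_bigr (fun _ => G (v x) * 1)); last by move=> *; rewrite mulr1.
  rewrite -mulr_sumr cntXr //.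
  by rewrite x1 ltnW.
rewrite (eq_bigr (fun _ => G (v x) * 1)); last by move=> *; rewrite mulr1.
  rewrite -mulr_sumr -cntXr; last first.
  by rewrite xn.
congr (_ * _); apply: eq_bigl => y; rewrite Hx /= -ltnNge.
by case: (y \in _).
Qed.

End ZN.
Lemma term1 (q : rat) (n r : nat) : q != 0 -> (1 <= r < n)%N ->
  (q ^+ (n - r) - q ^+ (n - r.+1)) * ((q ^+ n * q ^+ r * q ^+ n - q ^+ n - 1) * q ^+ n) =
  (q - 1) * q ^+ (2 * n - 1) * (q ^+ (2 * n) - q ^+ (n - r) - q ^- r).
Proof.
move=> q0 /andP[r1 rn].
have [k ->] : exists k, n = (r + k.+1)%N by exists (n - r.+1)%N; lia.
have -> : (r + k.+1 - r = k.+1)%N by lia.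
have -> : (r + k.+1 - r.+1 = k)%N by lia.
have -> : (2 * (r + k.+1) - 1 = (r + r) + (k + k).+1)%N by lia.
have -> : (2 * (r + k.+1) = (r + r) + (k + k).+2)%N by lia.
rewrite !(exprD, exprS).
have a0 : q ^+ r != 0 by rewrite expf_neq0.
move: (q ^+ r) (q ^+ k) a0 => a b a0.
by field; rewrite a0.
Qed.

Lemma term2 (q : rat) (n r : nat) : q != 0 -> (1 <= r < n)%N ->
  (q ^+ (n - r) - q ^+ (n - r.+1)) * (((q ^+ n * q ^+ r * q ^+ n - q ^+ n - 1) * q ^+ n) *
     ((q ^+ (n - r) - 1) + (q ^+ (n - r.+1) - 1))) =
  2 * ((q - 1) * q ^+ (2 * n - 1) *
      ((q ^+ (3 * n) + q ^+ n + 1) * q ^- r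
                - (q ^+ (2 * n) + q ^+ n) * q ^- (2 * r) - q ^+ (2 * n)))
  - (q - 1) ^+ 2 * (q ^+ (3 * n - 2 * r - 2) * (q ^+ (2 * n + r) - q ^+ n - 1)).
Proof.
move=> q0 /andP[r1 rn].
have [k ->] : exists k, n = (r + k.+1)%N by exists (n - r.+1)%N; lia.
have -> : (r + k.+1 - r = k.+1)%N by lia.
have -> : (r + k.+1 - r.+1 = k)%N by lia.
have -> : (2 * (r + k.+1) - 1 = (r + r) + (k + k).+1)%N by lia.
have -> : (3 * (r + k.+1) - 2 * r - 2 = r + (k + k + k).+1)%N by lia.
have -> : (3 * (r + k.+1) = (r + r + r) + (k + k + k).+3)%N by lia.
have -> : (2 * (r + k.+1) + r = (r + r + r) + (k + k).+2)%N by lia.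
have -> : (2 * (r + k.+1) = (r + r) + (k + k).+2)%N by lia.
have -> : (2 * r = r + r)%N by lia.
rewrite !(exprD, exprS).
have a0 : q ^+ r != 0 by rewrite expf_neq0.
move: (q ^+ r) (q ^+ k) a0 => a b a0.
by field; rewrite a0.
Qed.

Unset Implicit Arguments.

Theorem corollary2p8 (p n : nat) (hp : prime p) (hn : (2 <= n)%N) :
  let R := 'Z_(p ^ n) in
  let q : rat := p%:R in
  [/\ (degset (A4 R))%:R =
        (q - 1) * q ^+ (2 * n - 1) *
        \sum_(1 <= r < n) (q ^+ (2 * n) - q ^+ (n - r) - q ^- r),
      (degset (A5 R))%:R =
        (q - 1) * q ^+ (2 * n - 1) *
        \sum_(1 <= r < n) (q ^+ (2 * n) - q ^+ (n - r) - q ^- r)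
    & (degset (A6 R))%:R =
        2 * ((q - 1) * q ^+ (2 * n - 1) *
             \sum_(1 <= r < n)
               ((q ^+ (3 * n) + q ^+ n + 1) * q ^- r
                - (q ^+ (2 * n) + q ^+ n) * q ^- (2 * r) - q ^+ (2 * n)))
        - (q - 1) ^+ 2 *
          \sum_(1 <= r < n)
            q ^+ (3 * n - 2 * r - 2) * (q ^+ (2 * n + r) - q ^+ n - 1)].
Proof.
move=> R q.
have q0 : q != 0 by rewrite /q Num.Theory.pnatr_eq0 -lt0n prime_gt0.
pose G (r : nat) : rat :=
  (((p ^ n * p ^ r)%N)%:R * (p ^ n)%N%:R - (p ^ n)%N%:R - 1) *+ (p ^ n).
have cB r : (1 <= r < n)%N ->
    ((p ^ (n - r) - p ^ (n - r.+1))%N%:R : rat) = q ^+ (n - r) - q ^+ (n - r.+1).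
  move=> /andP[r1 rn]; rewrite natrB ?natrX // leq_pexp2l ?prime_gt0 //; lia.
have GE r : G r = (q ^+ n * q ^+ r * q ^+ n - q ^+ n - 1) * q ^+ n.
  by rewrite /G -mulr_natr !natrM !natrX.
have T1 : \sum_(m in nzzd R) G (v m) =
    (q - 1) * q ^+ (2 * n - 1) *
        \sum_(1 <= r < n) (q ^+ (2 * n) - q ^+ (n - r) - q ^- r).
  rewrite (L1 hp hn G) mulr_sumr; apply: eq_big_nat => r hr.
  by rewrite cB // GE term1.
split.
- rewrite A4E (@degset_F R (fun x : R * R => (x.1 \in nzzd R) && (x.2 == 0))); last first.
    by move=> [a b] /andP[/nzzd_neq0 a0 _]; apply: contraNneq a0 => [[->]].
  rewrite sum_pair1 -T1 (ZcardT hp hn); apply: eq_bigr => m Hm.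
  by rewrite /= (S0 hp hn Hm).
- rewrite A5E (@degset_F R (fun x : R * R => (x.1 == 0) && (x.2 \in nzzd R))); last first.
    by move=> [a b] /andP[_ /nzzd_neq0 b0]; apply: contraNneq b0 => [[_ ->]].
  rewrite sum_pair2 -T1 (ZcardT hp hn); apply: eq_bigr => m Hm.
  by rewrite /= S_swap (S0 hp hn Hm).
rewrite A6E (@degset_F R (fun x : R * R => (x.1 \in nzzd R) && (x.2 \in nzzd R))); last first.
  by move=> [a b] /andP[/nzzd_neq0 a0 _]; apply: contraNneq a0 => [[->]].
rewrite sum_pair3 (ZcardT hp hn).
transitivity (\sum_(x in nzzd R) \sum_(y in nzzd R) G (minn (v x) (v y))).
  apply: eq_bigr => x Hx; apply: eq_bigr => y Hy.
  by rewrite /= (SX hp hn Hx Hy).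
rewrite (min_split hp hn G).
rewrite (L1 hp hn (fun r => G r * (cnt p n r + cnt p n r.+1))).
rewrite !mulr_sumr -sumrB; apply: eq_big_nat => r hr.
have c1 s : (s <= n)%N -> cnt p n s = q ^+ (n - s) - 1.
  move=> sn; rewrite /cnt natrB ?natrX // expn_gt0 prime_gt0 //.
rewrite cB // GE !c1; last 2 first; try lia.
by rewrite term2.
Qed.
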